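(* Let $(P)$ be a Banach space property (a class of Banach spaces closed under topological isomorphism). Let $X$ and $Y$ be Banach spaces and let $T\in B(X)$ and $S\in B(Y)$ be equivalent after extension, with $S$ compact. Suppose that $X$ transfers property $(P)$ to closed subspaces and that $(P)$ is preserved under direct sums with finite dimensional spaces. Then $Y$ has property $(P)$.
   Context: All Banach spaces are complex; $B(X,Y)$ denotes bounded linear operators; invertibility means bounded inverse; $X\oplus Y$ is the $\ell^2$-direct sum and $\mathrm{id}_X$ the identity. Operators $T\in B(X)$ and $S\in B(Y)$ are equivalent after extension if there exist Banach spaces $X'$, $Y'$ and invertible $E\in B(Y\oplus Y',X\oplus X')$, $F\in B(X\oplus X',Y\oplus Y')$ with $\begin{bmatrix}T&0\\0&\mathrm{id}_{X'}\end{bmatrix}=E\begin{bmatrix}S&0\\0&\mathrm{id}_{Y'}\end{bmatrix}F$. $X$ transfers property $(P)$ to closed subspaces if every closed subspace of $X$ has $(P)$. $(P)$ is preserved under direct sums with finite dimensional spaces if $Y\oplus Z$ has $(P)$ whenever $Y$ has $(P)$ and $Z$ is finite dimensional. *)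

(* Defs.v *)
From Stdlib Require Import Reals Lra Psatz ProofIrrelevance.
Open Scope R_scope.

Record C := mkC { Re : R; Im : R }.
Definition Cadd (z w : C) : C := mkC (Re z + Re w) (Im z + Im w).
Definition Cmul (z w : C) : C :=
  mkC (Re z * Re w - Im z * Im w) (Re z * Im w + Im z * Re w).
Definition C0 : C := mkC 0 0.
Definition C1 : C := mkC 1 0.
Definition Cnorm (z : C) : R := sqrt (Re z ^ 2 + Im z ^ 2).

Lemma Cnorm_ge0 z : 0 <= Cnorm z.
Proof. apply sqrt_pos. Qed.

Record Banach := {
  car :> Type;
  bzero : car;
  badd : car -> car -> car;
  bopp : car -> car;
  bscal : C -> car -> car;
  bnorm : car -> R;
  badd_assoc : forall x y z, badd x (badd y z) = badd (badd x y) z;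
  badd_comm : forall x y, badd x y = badd y x;
  badd_0 : forall x, badd bzero x = x;
  badd_opp : forall x, badd x (bopp x) = bzero;
  bscal_assoc : forall a b x, bscal a (bscal b x) = bscal (Cmul a b) x;
  bscal_1 : forall x, bscal C1 x = x;
  bscal_addl : forall a b x, bscal (Cadd a b) x = badd (bscal a x) (bscal b x);
  bscal_addr : forall a x y, bscal a (badd x y) = badd (bscal a x) (bscal a y);
  bnorm_ge0 : forall x, 0 <= bnorm x;
  bnorm_eq0 : forall x, bnorm x = 0 -> x = bzero;
  bnorm_scal : forall a x, bnorm (bscal a x) = Cnorm a * bnorm x;
  bnorm_tri : forall x y, bnorm (badd x y) <= bnorm x + bnorm y;
  bcomplete : forall u : nat -> car,
    (forall eps, 0 < eps -> exists N, forall m n, (N <= m)%nat -> (N <= n)%nat ->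
        bnorm (badd (u m) (bopp (u n))) < eps) ->
    exists l, forall eps, 0 < eps -> exists N, forall n, (N <= n)%nat ->
        bnorm (badd (u n) (bopp l)) < eps
}.

Arguments bzero {b0}. Arguments badd {b0}. Arguments bopp {b0}.
Arguments bscal {b0}. Arguments bnorm {b0}.

Definition converges {X : Banach} (u : nat -> X) (l : X) : Prop :=
  forall eps, 0 < eps -> exists N, forall n, (N <= n)%nat ->
    bnorm (badd (u n) (bopp l)) < eps.

Lemma le_l2 a b : 0 <= a -> a <= sqrt (a ^ 2 + b ^ 2).
Proof.
  intros Ha. rewrite <- (sqrt_pow2 a Ha) at 1. apply sqrt_le_1_alt. nra.
Qed.

Lemma l2_le_sum a b : 0 <= a -> 0 <= b -> sqrt (a ^ 2 + b ^ 2) <= a + b.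
Proof.
  intros Ha Hb. rewrite <- (sqrt_pow2 (a + b)) by lra. apply sqrt_le_1_alt. nra.
Qed.

Lemma l2_tri p q a b a' b' :
  0 <= p -> 0 <= q -> 0 <= a -> 0 <= b -> 0 <= a' -> 0 <= b' ->
  p <= a + a' -> q <= b + b' ->
  sqrt (p ^ 2 + q ^ 2) <= sqrt (a ^ 2 + b ^ 2) + sqrt (a' ^ 2 + b' ^ 2).
Proof.
  intros Hp Hq Ha Hb Ha' Hb' H1 H2.
  set (s := sqrt (a ^ 2 + b ^ 2)). set (t := sqrt (a' ^ 2 + b' ^ 2)).
  assert (Hs : 0 <= s) by apply sqrt_pos.
  assert (Ht : 0 <= t) by apply sqrt_pos.
  assert (Hs2 : s ^ 2 = a ^ 2 + b ^ 2) by (apply pow2_sqrt; nra).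
  assert (Ht2 : t ^ 2 = a' ^ 2 + b' ^ 2) by (apply pow2_sqrt; nra).
  assert (Hst : a * a' + b * b' <= s * t).
  { destruct (Rle_lt_dec (a * a' + b * b') (s * t)) as [H|H]; [exact H|].
    exfalso.
    assert (Hpos : 0 <= s * t) by (apply Rmult_le_pos; assumption).
    assert (Hsq : (s * t) ^ 2 < (a * a' + b * b') ^ 2).
    { set (u := s * t) in *. set (w := a * a' + b * b') in *. simpl. nra. }
    assert ((s * t) ^ 2 = (a ^ 2 + b ^ 2) * (a' ^ 2 + b' ^ 2)).
    { rewrite Rpow_mult_distr, Hs2, Ht2. reflexivity. }
    assert (Hcs : (a * a' + b * b') ^ 2 <= (a ^ 2 + b ^ 2) * (a' ^ 2 + b' ^ 2)).
    { assert (0 <= (a * b' - b * a') ^ 2) by apply pow2_ge_0. simpl in *. nra. }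
    lra. }
  rewrite <- (sqrt_pow2 (s + t)) by lra. apply sqrt_le_1_alt. nra.
Qed.

Section DSum.
Variables X Y : Banach.

Definition dnorm (p : X * Y) : R := sqrt (bnorm (fst p) ^ 2 + bnorm (snd p) ^ 2).

Definition dsum : Banach.
Proof.
  refine (@Build_Banach (X * Y)%type (bzero, bzero)
    (fun p q => (badd (fst p) (fst q), badd (snd p) (snd q)))
    (fun p => (bopp (fst p), bopp (snd p)))
    (fun a p => (bscal a (fst p), bscal a (snd p)))
    dnorm _ _ _ _ _ _ _ _ _ _ _ _ _).
  - intros [] [] []; simpl; f_equal; apply badd_assoc.
  - intros [] []; simpl; f_equal; apply badd_comm.
  - intros []; simpl; f_equal; apply badd_0.
  - intros []; simpl; f_equal; apply badd_opp.
  - intros a b []; simpl; f_equal; apply bscal_assoc.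
  - intros []; simpl; f_equal; apply bscal_1.
  - intros a b []; simpl; f_equal; apply bscal_addl.
  - intros a [] []; simpl; f_equal; apply bscal_addr.
  - intros; apply sqrt_pos.
  - intros [x y]; unfold dnorm; cbn [fst snd]; intros H.
    pose proof (bnorm_ge0 X x). pose proof (bnorm_ge0 Y y).
    apply sqrt_eq_0 in H; [|nra].
    f_equal; apply bnorm_eq0; nra.
  - intros a [x y]; unfold dnorm; cbn [fst snd].
    rewrite !bnorm_scal, !Rpow_mult_distr, <- Rmult_plus_distr_l.
    rewrite sqrt_mult_alt by (apply pow2_ge_0).
    rewrite sqrt_pow2 by apply Cnorm_ge0. reflexivity.
  - intros [x y] [x' y']; unfold dnorm; cbn [fst snd].
    apply l2_tri; try apply bnorm_ge0; apply bnorm_tri.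
  - intros u Hu.
    assert (HX : exists l, converges (fun n => fst (u n)) l).
    { apply bcomplete. intros eps He. destruct (Hu eps He) as [N HN].
      exists N. intros m n Hm Hn. eapply Rle_lt_trans; [|apply (HN m n Hm Hn)].
      unfold dnorm; cbn [fst snd]. apply le_l2, bnorm_ge0. }
    assert (HY : exists l, converges (fun n => snd (u n)) l).
    { apply bcomplete. intros eps He. destruct (Hu eps He) as [N HN].
      exists N. intros m n Hm Hn. eapply Rle_lt_trans; [|apply (HN m n Hm Hn)].
      unfold dnorm; cbn [fst snd]. rewrite Rplus_comm. apply le_l2, bnorm_ge0. }
    destruct HX as [l1 H1]. destruct HY as [l2 H2].
    exists (l1, l2). intros eps He.
    destruct (H1 (eps / 2)) as [N1 HN1]; [lra|].
    destruct (H2 (eps / 2)) as [N2 HN2]; [lra|].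
    exists (N1 + N2)%nat. intros n Hn.
    specialize (HN1 n ltac:(lia)). specialize (HN2 n ltac:(lia)).
    unfold dnorm; cbn [fst snd].
    eapply Rle_lt_trans; [apply l2_le_sum; apply bnorm_ge0|]. lra.
Defined.
End DSum.

Record ClosedSubspace (X : Banach) := {
  smem : X -> Prop;
  smem_0 : smem bzero;
  smem_add : forall x y, smem x -> smem y -> smem (badd x y);
  smem_scal : forall a x, smem x -> smem (bscal a x);
  smem_closed : forall (u : nat -> X) l, (forall n, smem (u n)) -> converges u l -> smem l
}.
Arguments smem {X}.

Lemma badd_cancel (X : Banach) (x y z : X) : badd x z = badd y z -> x = y.
Proof.
  intros H.
  assert (E : badd (badd x z) (bopp z) = badd (badd y z) (bopp z)) by (rewrite H; reflexivity).
  rewrite <- !badd_assoc, badd_opp, !(badd_comm _ _ bzero), !badd_0 in E. exact E.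
Qed.

Lemma bscal_0 (X : Banach) (x : X) : bscal C0 x = bzero.
Proof.
  apply (badd_cancel X _ _ (bscal C0 x)). rewrite <- bscal_addl, badd_0.
  unfold Cadd, C0; simpl. rewrite Rplus_0_l. reflexivity.
Qed.

Lemma bopp_scal (X : Banach) (x : X) : bopp x = bscal (mkC (-1) 0) x.
Proof.
  apply (badd_cancel X _ _ x). rewrite (badd_comm _ (bopp x)), badd_opp.
  rewrite <- (bscal_1 X x) at 2. rewrite <- bscal_addl.
  unfold Cadd, C1; simpl.
  replace (-1 + 1) with 0 by lra. replace (0 + 0) with 0 by lra.
  symmetry. apply bscal_0.
Qed.

Lemma smem_opp (X : Banach) (M : ClosedSubspace X) x : smem M x -> smem M (bopp x).
Proof. intros H; rewrite bopp_scal; apply smem_scal, H. Qed.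

Lemma sig_eq {A : Type} {P : A -> Prop} (a b : {x : A | P x}) :
  proj1_sig a = proj1_sig b -> a = b.
Proof.
  destruct a as [a Ha], b as [b Hb]; simpl; intros ->.
  f_equal; apply proof_irrelevance.
Qed.

Section Sub.
Variables (X : Banach) (M : ClosedSubspace X).

Definition subBanach : Banach.
Proof.
  refine (@Build_Banach {x : X | smem M x}
    (exist _ bzero (smem_0 X M))
    (fun p q => exist _ (badd (proj1_sig p) (proj1_sig q))
                  (smem_add X M _ _ (proj2_sig p) (proj2_sig q)))
    (fun p => exist _ (bopp (proj1_sig p)) (smem_opp X M _ (proj2_sig p)))
    (fun a p => exist _ (bscal a (proj1_sig p)) (smem_scal X M a _ (proj2_sig p)))
    (fun p => bnorm (proj1_sig p)) _ _ _ _ _ _ _ _ _ _ _ _ _).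
  - intros; apply sig_eq; simpl; apply badd_assoc.
  - intros; apply sig_eq; simpl; apply badd_comm.
  - intros; apply sig_eq; simpl; apply badd_0.
  - intros; apply sig_eq; simpl; apply badd_opp.
  - intros; apply sig_eq; simpl; apply bscal_assoc.
  - intros; apply sig_eq; simpl; apply bscal_1.
  - intros; apply sig_eq; simpl; apply bscal_addl.
  - intros; apply sig_eq; simpl; apply bscal_addr.
  - intros; apply bnorm_ge0.
  - intros [z Hz] H; apply sig_eq; simpl; apply bnorm_eq0, H.
  - intros; simpl; apply bnorm_scal.
  - intros; simpl; apply bnorm_tri.
  - intros u Hu.
    destruct (bcomplete X (fun n => proj1_sig (u n)) Hu) as [l Hl].
    assert (Hm : smem M l).
    { apply (smem_closed X M (fun n => proj1_sig (u n))); [intros n; apply proj2_sig | exact Hl]. }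
    exists (exist _ l Hm). exact Hl.
Defined.
End Sub.

Definition bounded_linear {X Y : Banach} (f : X -> Y) : Prop :=
  (forall x y, f (badd x y) = badd (f x) (f y)) /\
  (forall a x, f (bscal a x) = bscal a (f x)) /\
  (exists M : R, forall x, bnorm (f x) <= M * bnorm x).

Definition invertible {X Y : Banach} (f : X -> Y) : Prop :=
  bounded_linear f /\
  exists g : Y -> X, bounded_linear g /\ (forall x, g (f x) = x) /\ (forall y, f (g y) = y).

Definition isomorphic (X Y : Banach) : Prop := exists f : X -> Y, invertible f.

Definition compact_op {X Y : Banach} (K : X -> Y) : Prop :=
  forall u : nat -> X, (forall n, bnorm (u n) <= 1) ->
    exists phi : nat -> nat, (forall n, (phi n < phi (S n))%nat) /\
      exists l : Y, converges (fun n => K (u (phi n))) l.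

Fixpoint lincomb {X : Banach} (n : nat) (c : nat -> C) (v : nat -> X) : X :=
  match n with
  | O => bzero
  | S k => badd (lincomb k c v) (bscal (c k) (v k))
  end.

Definition finite_dimensional (Z : Banach) : Prop :=
  exists (n : nat) (v : nat -> Z), forall z : Z, exists c : nat -> C, z = lincomb n c v.

Definition banach_property (P : Banach -> Prop) : Prop :=
  forall X Y : Banach, isomorphic X Y -> P X -> P Y.

Definition transfers_to_closed_subspaces (P : Banach -> Prop) (X : Banach) : Prop :=
  forall M : ClosedSubspace X, P (subBanach X M).

Definition preserved_under_findim_sums (P : Banach -> Prop) : Prop :=
  forall Y Z : Banach, P Y -> finite_dimensional Z -> P (dsum Y Z).

Definition equivalent_after_extension {X Y : Banach} (T : X -> X) (S : Y -> Y) : Prop :=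
  exists (X' Y' : Banach) (E : dsum Y Y' -> dsum X X') (F : dsum X X' -> dsum Y Y'),
    invertible E /\ invertible F /\
    forall p : dsum X X',
      ((T (fst p), snd p) : dsum X X') =
      E (let q := F p in ((S (fst q), snd q) : dsum Y Y')).

(* Main.v *)
Require Import Defs.
From Stdlib Require Import Reals Lra Lia Psatz Classical ClassicalEpsilon ProofIrrelevance Arith.
Open Scope R_scope.


Notation "x +: y" := (badd x y) (at level 50, left associativity).
Notation "x -: y" := (badd x (bopp y)) (at level 50, left associativity).
Notation "-: x" := (bopp x) (at level 35, x at level 35, right associativity).
Notation "'nn' x" := (bnorm x) (at level 10).
Definition rs {X : Banach} (r : R) (x : X) : X := bscal (mkC r 0) x.

Section Alg.
Variable X : Banach.
Implicit Types x y z w : X.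

Lemma addr0 x : x +: bzero = x.
Proof. rewrite badd_comm; apply badd_0. Qed.
Lemma addNr x : -: x +: x = bzero.
Proof. rewrite badd_comm; apply badd_opp. Qed.
Lemma oppK x : -: -: x = x.
Proof. apply (badd_cancel X _ _ (-: x)). rewrite addNr, badd_opp. reflexivity. Qed.
Lemma opp0 : -: (@bzero X) = bzero.
Proof. apply (badd_cancel X _ _ bzero). rewrite addNr, addr0. reflexivity. Qed.
Lemma addrK x y : x +: y -: y = x.
Proof. rewrite <- badd_assoc, badd_opp, addr0. reflexivity. Qed.
Lemma subrK x y : x -: y +: y = x.
Proof. rewrite <- badd_assoc, addNr, addr0. reflexivity. Qed.
Lemma oppD x y : -: (x +: y) = -: x +: -: y.
Proof.
  apply (badd_cancel X _ _ (x +: y)). rewrite addNr.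
  rewrite (badd_comm X x y), badd_assoc, <- (badd_assoc X (-: x)), addNr, addr0, addNr.
  reflexivity.
Qed.
Lemma subr_eq0 x y : x -: y = bzero -> x = y.
Proof. intros H. rewrite <- (subrK x y), H, badd_0. reflexivity. Qed.
Lemma subrr x : x -: x = bzero.
Proof. apply badd_opp. Qed.
Lemma subr0 x : x -: bzero = x.
Proof. rewrite opp0; apply addr0. Qed.
Lemma add_sub4 x y z w : (x +: y) -: (z +: w) = (x -: z) +: (y -: w).
Proof.
  rewrite oppD. rewrite <- !badd_assoc. f_equal.
  rewrite !badd_assoc. f_equal. apply badd_comm.
Qed.
Lemma sub_sub4 x y z w : (x -: y) -: (z -: w) = (x -: z) -: (y -: w).
Proof. rewrite add_sub4, (oppD y). reflexivity. Qed.
Lemma opp_sub x y : -: (x -: y) = y -: x.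
Proof. rewrite oppD, oppK, badd_comm. reflexivity. Qed.
Lemma subKr x y : x +: (y -: x) = y.
Proof. rewrite badd_comm, subrK. reflexivity. Qed.
Lemma sub_sub x y : x -: (x -: y) = y.
Proof. rewrite opp_sub. apply subKr. Qed.
Lemma addKr x y : x +: y -: x = y.
Proof. rewrite (badd_comm X x y), addrK. reflexivity. Qed.
Lemma sub_add x y z : x -: (y +: z) = x -: y -: z.
Proof. rewrite oppD, badd_assoc. reflexivity. Qed.

Lemma bscal0r a : bscal a (@bzero X) = bzero.
Proof.
  apply (badd_cancel X _ _ (bscal a bzero)). rewrite <- bscal_addr, !badd_0. reflexivity.
Qed.
Lemma bscal_opp a x : bscal a (-: x) = -: bscal a x.
Proof.
  apply (badd_cancel X _ _ (bscal a x)). rewrite addNr, <- bscal_addr, addNr, bscal0r.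
  reflexivity.
Qed.
Lemma bscal_sub a x y : bscal a (x -: y) = bscal a x -: bscal a y.
Proof. rewrite bscal_addr, bscal_opp. reflexivity. Qed.
Lemma bscal_subl a b x : bscal (Cadd a (mkC (- Re b) (- Im b))) x = bscal a x -: bscal b x.
Proof.
  rewrite bscal_addl. f_equal.
  apply (badd_cancel X _ _ (bscal b x)). rewrite addNr, <- bscal_addl.
  unfold Cadd; simpl. replace (- Re b + Re b) with 0 by lra. replace (- Im b + Im b) with 0 by lra.
  apply bscal_0.
Qed.

Lemma Cnorm_real r : Cnorm (mkC r 0) = Rabs r.
Proof. unfold Cnorm; cbn [Re Im]. replace (r ^ 2 + 0 ^ 2) with (Rsqr r) by (unfold Rsqr; ring).
  apply sqrt_Rsqr_abs. Qed.

Lemma rs_norm r x : nn (rs r x) = Rabs r * nn x.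
Proof. unfold rs. rewrite bnorm_scal, Cnorm_real. reflexivity. Qed.
Lemma rs_rs r s x : rs r (rs s x) = rs (r * s) x.
Proof. unfold rs. rewrite bscal_assoc. f_equal. unfold Cmul; simpl. f_equal; ring. Qed.
Lemma rs1 x : rs 1 x = x.
Proof. apply bscal_1. Qed.
Lemma rs_add r x y : rs r (x +: y) = rs r x +: rs r y.
Proof. apply bscal_addr. Qed.
Lemma rs_sub r x y : rs r (x -: y) = rs r x -: rs r y.
Proof. apply bscal_sub. Qed.
Lemma rs0 r : rs r (@bzero X) = bzero.
Proof. apply bscal0r. Qed.

Lemma norm0 : nn (@bzero X) = 0.
Proof. rewrite <- (bscal_0 X bzero), bnorm_scal. unfold Cnorm, C0; cbn [Re Im].
  replace (0 ^ 2 + 0 ^ 2) with 0 by ring. rewrite sqrt_0. ring. Qed.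
Lemma norm_opp x : nn (-: x) = nn x.
Proof. rewrite bopp_scal, bnorm_scal, Cnorm_real. rewrite Rabs_left by lra. ring. Qed.
Lemma norm_sym x y : nn (x -: y) = nn (y -: x).
Proof. rewrite <- opp_sub, norm_opp. reflexivity. Qed.
Lemma norm_tri3 x y z : nn (x -: z) <= nn (x -: y) + nn (y -: z).
Proof.
  replace (x -: z) with ((x -: y) +: (y -: z)).
  - apply bnorm_tri.
  - rewrite <- badd_assoc, (badd_assoc X (-: y)), addNr, badd_0. reflexivity.
Qed.
Lemma norm_sub_le x y : nn (x -: y) <= nn x + nn y.
Proof. rewrite <- (norm_opp y). apply bnorm_tri. Qed.
Lemma norm_rev x y : nn x - nn y <= nn (x -: y).
Proof. pose proof (norm_tri3 x y bzero). rewrite !subr0 in H. lra. Qed.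
Lemma norm_eq0_sub x y : nn (x -: y) = 0 -> x = y.
Proof. intros H. apply subr_eq0, bnorm_eq0, H. Qed.
End Alg.
Arguments addr0 {X}. Arguments addNr {X}. Arguments oppK {X}. Arguments opp0 {X}.
Arguments addrK {X}. Arguments subrK {X}. Arguments oppD {X}. Arguments subr_eq0 {X}.
Arguments subrr {X}. Arguments subr0 {X}. Arguments add_sub4 {X}. Arguments sub_sub4 {X}.
Arguments opp_sub {X}. Arguments sub_sub {X}. Arguments subKr {X}. Arguments addKr {X}.
Arguments sub_add {X}.
Arguments bscal0r {X}. Arguments bscal_opp {X}. Arguments bscal_sub {X}. Arguments bscal_subl {X}.
Arguments rs_norm {X}. Arguments rs_rs {X}. Arguments rs1 {X}. Arguments rs_add {X}.
Arguments rs_sub {X}. Arguments rs0 {X}. Arguments norm0 {X}. Arguments norm_opp {X}.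
Arguments norm_sym {X}. Arguments norm_tri3 {X}. Arguments norm_sub_le {X}.
Arguments norm_rev {X}. Arguments norm_eq0_sub {X}.
Lemma sub_subr (X : Banach) (x y z : X) : x -: (y -: z) = x -: y +: z.
Proof. rewrite oppD, oppK, badd_assoc. reflexivity. Qed.


Definition incr (phi : nat -> nat) := forall n, (phi n < phi (S n))%nat.

Lemma incr_lt phi : incr phi -> forall m n, (m < n)%nat -> (phi m < phi n)%nat.
Proof.
  intros H m n Hmn. induction Hmn. apply H. specialize (H m0). lia.
Qed.
Lemma incr_ge phi : incr phi -> forall n, (n <= phi n)%nat.
Proof. intros H n. induction n. lia. specialize (H n). lia. Qed.
Lemma incr_comp phi psi : incr phi -> incr psi -> incr (fun n => phi (psi n)).
Proof. intros H1 H2 n. apply incr_lt; auto. Qed.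

Section Conv.
Variable X : Banach.
Implicit Types u v : nat -> X. Implicit Types l m : X.

Lemma conv_unique u l l' : converges u l -> converges u l' -> l = l'.
Proof.
  intros H1 H2. apply norm_eq0_sub.
  destruct (Rle_lt_or_eq_dec 0 _ (bnorm_ge0 _ (l -: l'))) as [Hp|Hp]; [|auto].
  exfalso. set (e := nn (l -: l')) in *.
  destruct (H1 (e/2)) as [N1 HN1]; [lra|]. destruct (H2 (e/2)) as [N2 HN2]; [lra|].
  specialize (HN1 (N1+N2)%nat ltac:(lia)). specialize (HN2 (N1+N2)%nat ltac:(lia)).
  pose proof (norm_tri3 l (u (N1+N2)%nat) l'). rewrite (norm_sym l (u _)) in H. unfold e in *. lra.
Qed.

Lemma conv_const l : converges (fun _ => l) l.
Proof. intros e He. exists O. intros n _. rewrite subrr, norm0. exact He. Qed.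

Lemma conv_add u v l m : converges u l -> converges v m ->
  converges (fun n => u n +: v n) (l +: m).
Proof.
  intros H1 H2 e He.
  destruct (H1 (e/2)) as [N1 HN1]; [lra|]. destruct (H2 (e/2)) as [N2 HN2]; [lra|].
  exists (N1+N2)%nat. intros n Hn. rewrite add_sub4.
  specialize (HN1 n ltac:(lia)). specialize (HN2 n ltac:(lia)).
  eapply Rle_lt_trans. apply bnorm_tri. lra.
Qed.

Lemma conv_opp u l : converges u l -> converges (fun n => -: u n) (-: l).
Proof.
  intros H e He. destruct (H e He) as [N HN]. exists N. intros n Hn.
  rewrite <- oppD, norm_opp. auto.
Qed.

Lemma conv_sub u v l m : converges u l -> converges v m ->
  converges (fun n => u n -: v n) (l -: m).
Proof. intros H1 H2. apply conv_add; auto. apply conv_opp; auto. Qed.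

Lemma conv_subseq u l phi : incr phi -> converges u l -> converges (fun n => u (phi n)) l.
Proof.
  intros Hp H e He. destruct (H e He) as [N HN]. exists N. intros n Hn.
  apply HN. pose proof (incr_ge phi Hp n). lia.
Qed.

Lemma conv_ext u v l : (forall n, u n = v n) -> converges u l -> converges v l.
Proof. intros E H e He. destruct (H e He) as [N HN]. exists N. intros n Hn. rewrite <- E. auto. Qed.

Lemma bound_first u : forall N, exists B, forall i, (i < N)%nat -> nn (u i) <= B.
Proof.
  induction N. exists 0. intros; lia.
  destruct IHN as [B HB]. exists (Rmax B (nn (u N))). intros i Hi.
  destruct (Nat.eq_dec i N). subst. apply Rmax_r.
  eapply Rle_trans; [apply HB; lia| apply Rmax_l].
Qed.

Lemma conv_bounded u l : converges u l -> exists B, forall n, nn (u n) <= B.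
Proof.
  intros H. destruct (H 1) as [N HN]; [lra|]. destruct (bound_first u N) as [B HB].
  exists (Rmax B (nn l + 1)). intros n. destruct (le_lt_dec N n).
  - specialize (HN n l0). pose proof (norm_rev (u n) l).
    eapply Rle_trans; [|apply Rmax_r]. lra.
  - eapply Rle_trans; [apply HB; auto| apply Rmax_l].
Qed.

Lemma sep_false u phi l : incr phi -> converges (fun n => u (phi n)) l ->
  (forall m n : nat, (m < n)%nat -> 1/2 <= nn (u n -: u m)) -> False.
Proof.
  intros Hp Hc Hs. destruct (Hc (1/4)) as [N HN]; [lra|].
  pose proof (HN N ltac:(lia)). pose proof (HN (S N) ltac:(lia)).
  pose proof (Hs _ _ (Hp N)). pose proof (norm_tri3 (u (phi (S N))) l (u (phi N))).
  rewrite (norm_sym l) in H2. lra.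
Qed.

Lemma conv0 v : (forall k, nn (v k) <= / (INR k + 1)) -> converges v bzero.
Proof.
  intros H e He. destruct (archimed_cor1 e He) as [N [HN HN0]]. exists N. intros n Hn.
  rewrite subr0. eapply Rle_lt_trans. apply H. eapply Rle_lt_trans; [|exact HN].
  apply Rinv_le_contravar. apply lt_0_INR; lia. apply le_INR in Hn. lra.
Qed.

Lemma conv_norm0 u l : converges u l -> (forall n, nn (u n) = 1) -> l <> bzero.
Proof.
  intros H H1 E. subst. destruct (H (1/2)) as [N HN]; [lra|]. specialize (HN N (le_n _)).
  rewrite subr0, H1 in HN. lra.
Qed.

Lemma conv_rs u l r : converges u l -> converges (fun n => rs r (u n)) (rs r l).
Proof.
  intros H e He. destruct (H (e / (Rabs r + 1))) as [N HN].
  { apply Rdiv_lt_0_compat; auto. pose proof (Rabs_pos r); lra. }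
  exists N. intros n Hn. rewrite <- rs_sub, rs_norm. specialize (HN n Hn).
  pose proof (Rabs_pos r). pose proof (bnorm_ge0 _ (u n -: l)).
  apply Rmult_lt_compat_l with (r := Rabs r + 1) in HN; [|lra].
  replace ((Rabs r + 1) * (e / (Rabs r + 1))) with e in HN by (field; lra). nra.
Qed.
End Conv.

Section BL.
Variables X Y Z : Banach.

Lemma bl_add (f : X -> Y) : bounded_linear f -> forall x y, f (x +: y) = f x +: f y.
Proof. intros [H _]; exact H. Qed.
Lemma bl_scal (f : X -> Y) : bounded_linear f -> forall a x, f (bscal a x) = bscal a (f x).
Proof. intros [_ [H _]]; exact H. Qed.
Lemma bl_rs (f : X -> Y) : bounded_linear f -> forall r x, f (rs r x) = rs r (f x).
Proof. intros H r x. apply bl_scal, H. Qed.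
Lemma bl_0 (f : X -> Y) : bounded_linear f -> f bzero = bzero.
Proof. intros H. rewrite <- (bscal_0 X bzero), (bl_scal f H), bscal_0. reflexivity. Qed.
Lemma bl_opp (f : X -> Y) : bounded_linear f -> forall x, f (-: x) = -: f x.
Proof. intros H x. rewrite !bopp_scal, (bl_scal f H). reflexivity. Qed.
Lemma bl_sub (f : X -> Y) : bounded_linear f -> forall x y, f (x -: y) = f x -: f y.
Proof. intros H x y. rewrite (bl_add f H), (bl_opp f H). reflexivity. Qed.
Lemma bl_bound (f : X -> Y) : bounded_linear f -> exists M, 0 < M /\ forall x, nn (f x) <= M * nn x.
Proof.
  intros [_ [_ [M HM]]]. exists (Rmax M 1). split. pose proof (Rmax_r M 1); lra.
  intros x. eapply Rle_trans. apply HM. apply Rmult_le_compat_r. apply bnorm_ge0. apply Rmax_l.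
Qed.
Lemma bl_conv (f : X -> Y) u l : bounded_linear f -> converges u l ->
  converges (fun n => f (u n)) (f l).
Proof.
  intros H Hc e He. destruct (bl_bound f H) as [M [HM HMb]].
  destruct (Hc (e / M)) as [N HN]. apply Rdiv_lt_0_compat; auto.
  exists N. intros n Hn. rewrite <- (bl_sub f H). eapply Rle_lt_trans. apply HMb.
  specialize (HN n Hn). apply Rmult_lt_compat_l with (r := M) in HN; auto.
  replace (M * (e / M)) with e in HN by (field; lra). exact HN.
Qed.
End BL.
Arguments bl_add {X Y}. Arguments bl_scal {X Y}. Arguments bl_rs {X Y}. Arguments bl_0 {X Y}.
Arguments bl_opp {X Y}. Arguments bl_sub {X Y}. Arguments bl_bound {X Y}. Arguments bl_conv {X Y}.
Arguments conv_unique {X}. Arguments conv_const {X}. Arguments conv_add {X}. Arguments conv_opp {X}.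
Arguments conv_sub {X}. Arguments conv_subseq {X}. Arguments conv_ext {X}. Arguments conv_bounded {X}.
Arguments sep_false {X}. Arguments conv0 {X}. Arguments conv_norm0 {X}. Arguments conv_rs {X}.

Lemma bl_comp {X Y Z : Banach} (f : X -> Y) (g : Y -> Z) : bounded_linear f -> bounded_linear g ->
  bounded_linear (fun x => g (f x)).
Proof.
  intros Hf Hg. split; [|split].
  - intros x y. rewrite (bl_add f Hf), (bl_add g Hg). reflexivity.
  - intros a x. rewrite (bl_scal f Hf), (bl_scal g Hg). reflexivity.
  - destruct (bl_bound f Hf) as [M1 [H1 HM1]]. destruct (bl_bound g Hg) as [M2 [H2 HM2]].
    exists (M2 * M1). intros x. eapply Rle_trans. apply HM2.
    rewrite Rmult_assoc. apply Rmult_le_compat_l. lra. apply HM1.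
Qed.

Lemma bl_id (X : Banach) : bounded_linear (fun x : X => x).
Proof. split; [|split]; auto. exists 1. intros; lra. Qed.

Definition cpt {X Y : Banach} (f : X -> Y) : Prop :=
  forall (u : nat -> X) B, (forall n, nn (u n) <= B) ->
    exists phi, incr phi /\ exists l, converges (fun n => f (u (phi n))) l.

Lemma compact_cpt {X Y : Banach} (f : X -> Y) : bounded_linear f -> compact_op f -> cpt f.
Proof.
  intros Hl Hc u B HB. set (B' := Rmax B 1). assert (HB' : 0 < B') by (pose proof (Rmax_r B 1); unfold B'; lra).
  destruct (Hc (fun n => rs (/ B') (u n))) as [phi [Hphi [l Hl']]].
  { intros n. rewrite rs_norm, Rabs_right by (apply Rle_ge, Rlt_le, Rinv_0_lt_compat; auto).
    apply Rmult_le_reg_l with B'; auto. rewrite <- Rmult_assoc, Rinv_r, Rmult_1_l, Rmult_1_r by lra.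
    eapply Rle_trans. apply HB. apply Rmax_l. }
  exists phi. split; auto. exists (rs B' l).
  eapply conv_ext; [|apply (conv_rs _ _ B' Hl')]. intros n; simpl.
  rewrite (bl_rs f Hl), rs_rs, Rinv_r, rs1 by lra. reflexivity.
Qed.

Lemma cpt_comp_l {X Y Z : Banach} (f : X -> Y) (g : Y -> Z) : cpt f -> bounded_linear g ->
  cpt (fun x => g (f x)).
Proof.
  intros Hf Hg u B HB. destruct (Hf u B HB) as [phi [Hp [l Hl]]]. exists phi. split; auto.
  exists (g l). apply (bl_conv g _ _ Hg Hl).
Qed.

Lemma cpt_comp_r {X Y Z : Banach} (g : X -> Y) (f : Y -> Z) : bounded_linear g -> cpt f ->
  cpt (fun x => f (g x)).
Proof.
  intros Hg Hf u B HB. destruct (bl_bound g Hg) as [M [HM HMb]].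
  apply (Hf (fun n => g (u n)) (M * B)). intros n. eapply Rle_trans. apply HMb.
  apply Rmult_le_compat_l; auto. lra.
Qed.

Lemma cpt_add {X Y : Banach} (f g : X -> Y) : cpt f -> cpt g -> cpt (fun x => f x +: g x).
Proof.
  intros Hf Hg u B HB. destruct (Hf u B HB) as [phi [Hp [l Hl]]].
  destruct (Hg (fun n => u (phi n)) B (fun n => HB (phi n))) as [psi [Hq [m Hm]]].
  exists (fun n => phi (psi n)). split. apply incr_comp; auto.
  exists (l +: m). apply conv_add; auto. apply (conv_subseq _ _ _ Hq Hl).
Qed.

Lemma cpt_ext {X Y : Banach} (f g : X -> Y) : (forall x, f x = g x) -> cpt f -> cpt g.
Proof.
  intros E Hf u B HB. destruct (Hf u B HB) as [phi [Hp [l Hl]]]. exists phi. split; auto.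
  exists l. eapply conv_ext; [|exact Hl]. intros; apply E.
Qed.

Lemma cpt_zero {X Y : Banach} : cpt (fun _ : X => (@bzero Y)).
Proof. intros u B HB. exists (fun n => n). split. intros n; lia. exists bzero. apply conv_const. Qed.

Lemma conv_cauchy {X : Banach} (u : nat -> X) l : converges u l ->
  forall e, 0 < e -> exists N, forall m n, (N <= m)%nat -> (N <= n)%nat -> nn (u m -: u n) < e.
Proof.
  intros H e He. destruct (H (e/2)) as [N HN]; [lra|]. exists N. intros m n Hm Hn.
  pose proof (norm_tri3 (u m) l (u n)). rewrite (norm_sym l) in H0.
  pose proof (HN m Hm). pose proof (HN n Hn). lra.
Qed.

Lemma bl_subf {X Y : Banach} (f g : X -> Y) : bounded_linear f -> bounded_linear g ->
  bounded_linear (fun x => f x -: g x).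
Proof.
  intros Hf Hg. split; [|split].
  - intros x y. rewrite (bl_add f Hf), (bl_add g Hg), oppD.
    rewrite <- !badd_assoc. f_equal. rewrite !badd_assoc. f_equal. apply badd_comm.
  - intros a x. rewrite (bl_scal f Hf), (bl_scal g Hg), bscal_sub. reflexivity.
  - destruct (bl_bound f Hf) as [M1 [H1 HM1]]. destruct (bl_bound g Hg) as [M2 [H2 HM2]].
    exists (M1 + M2). intros x. eapply Rle_trans. apply norm_sub_le.
    specialize (HM1 x). specialize (HM2 x). lra.
Qed.


Lemma choice' {A B : Type} (P : A -> B -> Prop) : (forall a, exists b, P a b) -> exists f, forall a, P a (f a).
Proof.
  intros H. exists (fun a => proj1_sig (constructive_indefinite_description _ (H a))).
  intros a. exact (proj2_sig (constructive_indefinite_description _ (H a))).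
Qed.

Definition subsp {X : Banach} (M : X -> Prop) : Prop :=
  M bzero /\ (forall x y, M x -> M y -> M (x +: y)) /\ (forall a x, M x -> M (bscal a x)).
Definition closedp {X : Banach} (M : X -> Prop) : Prop :=
  forall (u : nat -> X) l, (forall n, M (u n)) -> converges u l -> M l.

Section Sub.
Variable X : Banach.
Implicit Types M : X -> Prop.
Lemma subsp_0 M : subsp M -> M bzero. Proof. intros [H _]; exact H. Qed.
Lemma subsp_add M : subsp M -> forall x y, M x -> M y -> M (x +: y). Proof. intros [_ [H _]]; exact H. Qed.
Lemma subsp_scal M : subsp M -> forall a x, M x -> M (bscal a x). Proof. intros [_ [_ H]]; exact H. Qed.
Lemma subsp_rs M : subsp M -> forall r x, M x -> M (rs r x). Proof. intros H r x; apply subsp_scal, H. Qed.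
Lemma subsp_opp M : subsp M -> forall x, M x -> M (-: x).
Proof. intros H x Hx. rewrite bopp_scal. apply subsp_scal; auto. Qed.
Lemma subsp_sub M : subsp M -> forall x y, M x -> M y -> M (x -: y).
Proof. intros H x y Hx Hy. apply subsp_add; auto. apply subsp_opp; auto. Qed.

Lemma dist_pos M w : closedp M -> ~ M w -> exists d, 0 < d /\ forall m, M m -> d <= nn (w -: m).
Proof.
  intros Hc Hw. apply NNPP. intros H.
  assert (H' : forall k : nat, exists m, M m /\ nn (w -: m) < / (INR k + 1)).
  { intros k. apply NNPP. intros H2. apply H. exists (/ (INR k + 1)). split.
    apply Rinv_0_lt_compat. pose proof (pos_INR k); lra.
    intros m Hm. apply Rnot_lt_le. intros H3. apply H2. exists m; auto. }
  apply choice' in H'. destruct H' as [f Hf]. apply Hw. apply (Hc f); [intros n; apply Hf|].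
  intros e He. destruct (conv0 (fun k => w -: f k) (fun k => Rlt_le _ _ (proj2 (Hf k))) e He) as [N HN].
  exists N. intros n Hn. specialize (HN n Hn). rewrite subr0, norm_sym in HN. exact HN.
Qed.

Lemma riesz M w : subsp M -> closedp M -> ~ M w ->
  exists s m0, M m0 /\ 0 < s /\ s * nn (w -: m0) = 1 /\ nn (rs s (w -: m0)) = 1 /\
    forall m, M m -> 1/2 <= nn (rs s (w -: m0) -: m).
Proof.
  intros Hs Hc Hw. destruct (dist_pos M w Hc Hw) as [d0 [Hd0 Hd0b]].
  set (E := fun t => forall m, M m -> t <= nn (w -: m)).
  assert (Hb : bound E). { exists (nn (w -: bzero)). intros t Ht. apply Ht, subsp_0, Hs. }
  destruct (completeness E Hb (ex_intro _ d0 Hd0b)) as [d [Hub Hlub]].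
  assert (Hd : d0 <= d) by (apply Hub; exact Hd0b).
  assert (HE : E d).
  { intros m Hm. apply Hlub. intros t Ht. apply Ht, Hm. }
  assert (Hm0 : exists m0, M m0 /\ nn (w -: m0) < 2 * d).
  { apply NNPP. intros H. assert (E (2 * d)).
    { intros m Hm. apply Rnot_lt_le. intros H2. apply H. exists m; auto. }
    specialize (Hub _ H0). lra. }
  destruct Hm0 as [m0 [Hm0 Hm0d]].
  assert (Hn0 : d <= nn (w -: m0)) by (apply HE, Hm0).
  set (n0 := nn (w -: m0)) in *.
  exists (/ n0), m0. split; auto. split. apply Rinv_0_lt_compat; lra.
  split. unfold n0. field. fold n0. lra.
  split. rewrite rs_norm, Rabs_right. unfold n0. field. fold n0. lra.
  apply Rle_ge, Rlt_le, Rinv_0_lt_compat; lra.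
  intros m Hm.
  replace (rs (/ n0) (w -: m0) -: m) with (rs (/ n0) (w -: (m0 +: rs n0 m))).
  - rewrite rs_norm, Rabs_right by (apply Rle_ge, Rlt_le, Rinv_0_lt_compat; lra).
    assert (d <= nn (w -: (m0 +: rs n0 m))).
    { apply HE. apply subsp_add; auto. apply subsp_rs; auto. }
    apply Rmult_le_reg_l with n0. lra. rewrite <- Rmult_assoc, Rinv_r, Rmult_1_l by lra. nra.
  - rewrite sub_add, rs_sub, rs_rs, Rinv_l, rs1 by lra. reflexivity.
Qed.
End Sub.
Arguments subsp_0 {X}. Arguments subsp_add {X}. Arguments subsp_scal {X}. Arguments subsp_rs {X}.
Arguments subsp_opp {X}. Arguments subsp_sub {X}. Arguments dist_pos {X}. Arguments riesz {X}.

Lemma ker_subsp {X Y : Banach} (f : X -> Y) : bounded_linear f -> subsp (fun x => f x = bzero).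
Proof.
  intros H. split; [|split].
  - apply bl_0, H.
  - intros x y Hx Hy. rewrite (bl_add f H), Hx, Hy, badd_0. reflexivity.
  - intros a x Hx. rewrite (bl_scal f H), Hx, bscal0r. reflexivity.
Qed.
Lemma ker_closed {X Y : Banach} (f : X -> Y) : bounded_linear f -> closedp (fun x => f x = bzero).
Proof.
  intros H u l Hu Hc. pose proof (bl_conv f u l H Hc).
  apply (conv_unique (fun n => f (u n))); auto. eapply conv_ext; [|apply conv_const].
  intros n; simpl; auto.
Qed.
Lemma ran_subsp {X Y : Banach} (f : X -> Y) : bounded_linear f -> subsp (fun y => exists x, y = f x).
Proof.
  intros H. split; [|split].
  - exists bzero. symmetry; apply bl_0, H.
  - intros x y [a Ha] [b Hb]. exists (a +: b). rewrite (bl_add f H); subst; auto.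
  - intros c x [a Ha]. exists (bscal c a). rewrite (bl_scal f H); subst; auto.
Qed.

Section Fred.
Variables (Y : Banach) (A K : Y -> Y).
Hypotheses (HA : bounded_linear A) (HK : cpt K) (HAK : forall y, A y = y -: K y).

Lemma decomp_AK y : y = A y +: K y.
Proof. rewrite HAK, subrK. reflexivity. Qed.

Lemma extract (z : nat -> Y) Bd y : (forall n, nn (z n) <= Bd) ->
  converges (fun n => A (z n)) y ->
  exists phi w, incr phi /\ converges (fun n => z (phi n)) w /\ A w = y.
Proof.
  intros Hb Hc. destruct (HK z Bd Hb) as [phi [Hp [l Hl]]].
  assert (Hw : converges (fun n => z (phi n)) (y +: l)).
  { eapply conv_ext; [|apply (conv_add _ _ _ _ (conv_subseq _ _ _ Hp Hc) Hl)].
    intros n; simpl. symmetry; apply decomp_AK. }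
  exists phi, (y +: l). split; auto. split; auto.
  apply (conv_unique (fun n => A (z (phi n)))). apply bl_conv; auto.
  apply (conv_subseq _ _ _ Hp Hc).
Qed.

Lemma ker_lower : exists c, 0 < c /\ forall x, exists n, A n = bzero /\ nn (x -: n) <= c * nn (A x).
Proof.
  apply NNPP. intros H.
  assert (H1 : forall k : nat, exists z, nn z = 1 /\ nn (A z) <= / (INR k + 1) /\
     forall n, A n = bzero -> 1/2 <= nn (z -: n)).
  { intros k. assert (Hk : exists x, forall n, A n = bzero -> (INR k + 1) * nn (A x) < nn (x -: n)).
    { apply NNPP. intros H2. apply H. exists (INR k + 1). split. pose proof (pos_INR k); lra.
      intros x. apply NNPP. intros H3. apply H2. exists x. intros n Hn. apply Rnot_le_lt.
      intros H4. apply H3. exists n. auto. }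
    destruct Hk as [x Hx].
    assert (Hnx : ~ A x = bzero).
    { intros E. specialize (Hx x E). rewrite E, norm0, subrr, norm0 in Hx. lra. }
    destruct (riesz (fun y => A y = bzero) x (ker_subsp A HA) (ker_closed A HA) Hnx)
      as [s [m0 [Hm0 [Hs [Hs1 [Hz Hd]]]]]].
    exists (rs s (x -: m0)). split; auto. split; auto.
    rewrite (bl_rs A HA), (bl_sub A HA), Hm0, subr0, rs_norm, Rabs_right by lra.
    specialize (Hx m0 Hm0). assert (0 < INR k + 1) by (pose proof (pos_INR k); lra).
    apply Rmult_le_reg_l with (INR k + 1); auto. rewrite Rinv_r by lra.
    pose proof (bnorm_ge0 _ (A x)). nra. }
  apply choice' in H1. destruct H1 as [z Hz].
  destruct (extract z 1 bzero) as [phi [w [Hp [Hw HAw]]]].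
  { intros n. rewrite (proj1 (Hz n)). lra. }
  { apply conv0. intros k. apply Hz. }
  destruct (Hw (1/2)) as [N HN]; [lra|]. specialize (HN N (le_n _)).
  pose proof (proj2 (proj2 (Hz (phi N))) w HAw). lra.
Qed.

Lemma ran_closed : closedp (fun y => exists x, y = A x).
Proof.
  intros u l Hu Hc. destruct (ker_lower) as [c [Hc0 Hcb]].
  assert (H1 : forall n, exists x, u n = A x /\ nn x <= c * nn (u n)).
  { intros n. destruct (Hu n) as [x Hx]. destruct (Hcb x) as [m [Hm Hxm]].
    exists (x -: m). rewrite (bl_sub A HA), Hm, subr0. split; auto. rewrite Hx; auto. }
  apply choice' in H1. destruct H1 as [x Hx].
  destruct (conv_bounded u l Hc) as [Bd HBd].
  destruct (extract x (c * Bd) l) as [phi [w [Hp [Hw HAw]]]].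
  { intros n. eapply Rle_trans. apply Hx. apply Rmult_le_compat_l; [lra|apply HBd]. }
  { eapply conv_ext; [|exact Hc]. intros n. apply Hx. }
  exists w. auto.
Qed.
End Fred.


Section Riesz.
Variables (Y : Banach) (A K : Y -> Y).
Hypotheses (HA : bounded_linear A) (HK : cpt K) (HAK : forall y, A y = y -: K y).

Definition An n (y : Y) := Nat.iter n A y.
Definition Kn n (y : Y) := y -: An n y.

Lemma An_bl n : bounded_linear (An n).
Proof.
  induction n. apply bl_id.
  change (bounded_linear (fun y => A (An n y))). apply bl_comp; auto.
Qed.

Lemma Kn_cpt n : cpt (Kn n).
Proof.
  induction n.
  - apply (cpt_ext (fun _ => bzero)); [|apply cpt_zero]. intros x. unfold Kn, An; simpl. rewrite subrr; auto.
  - apply (cpt_ext (fun y => Kn n y +: K (An n y))).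
    + intros y. unfold Kn. change (An (S n) y) with (A (An n y)). rewrite (HAK (An n y)), sub_subr. reflexivity.
    + apply cpt_add; auto. apply cpt_comp_r; auto. apply An_bl.
Qed.

Lemma An_eq n y : An n y = y -: Kn n y.
Proof. unfold Kn. rewrite sub_sub. reflexivity. Qed.

Lemma An_add p q y : An (p + q) y = An p (An q y).
Proof. apply Nat.iter_add. Qed.
Lemma An_S n y : An (S n) y = An n (A y).
Proof. apply Nat.iter_succ_r. Qed.
Lemma An_S' n y : An (S n) y = A (An n y).
Proof. reflexivity. Qed.

Lemma ker_mono j k y : (j <= k)%nat -> An j y = bzero -> An k y = bzero.
Proof.
  intros Hjk H. replace k with ((k - j) + j)%nat by lia. rewrite An_add, H. apply bl_0, An_bl.
Qed.
Lemma ran_mono j k y : (j <= k)%nat -> (exists x, y = An k x) -> exists x, y = An j x.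
Proof.
  intros Hjk [x Hx]. exists (An (k - j) x). rewrite Hx. rewrite <- An_add. f_equal. lia.
Qed.

Lemma ran_closed_n n : closedp (fun y => exists x, y = An n x).
Proof. apply (ran_closed Y (An n) (Kn n) (An_bl n) (Kn_cpt n) (An_eq n)). Qed.

Lemma K_eq y : K y = y -: A y.
Proof. rewrite HAK, sub_sub. reflexivity. Qed.

Lemma KK_eq (x y : Y) : K x -: K y = x -: (A x +: K y).
Proof. rewrite sub_add, HAK, sub_sub. reflexivity. Qed.

Lemma ascent : exists p, forall y, An (S p) y = bzero -> An p y = bzero.
Proof.
  apply NNPP. intros H.
  assert (H1 : forall p, exists u, nn u = 1 /\ An (S p) u = bzero /\
      forall m, An p m = bzero -> 1/2 <= nn (u -: m)).
  { intros p. assert (Hy : exists y, An (S p) y = bzero /\ An p y <> bzero).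
    { apply NNPP. intros H2. apply H. exists p. intros y Hy. apply NNPP. intros H3. apply H2. eauto. }
    destruct Hy as [y [Hy1 Hy2]].
    destruct (riesz (fun y => An p y = bzero) y (ker_subsp _ (An_bl p)) (ker_closed _ (An_bl p)) Hy2)
      as [s [m0 [Hm0 [Hs [_ [Hz Hd]]]]]].
    exists (rs s (y -: m0)). split; auto. split; auto.
    rewrite (bl_rs _ (An_bl (S p))), (bl_sub _ (An_bl (S p))), Hy1, An_S', Hm0, (bl_0 A HA), subrr.
    apply rs0. }
  apply choice' in H1. destruct H1 as [u Hu].
  destruct (HK u 1) as [phi [Hp [l Hl]]]. { intros n. rewrite (proj1 (Hu n)). lra. }
  apply (sep_false (fun n => K (u n)) phi l Hp Hl).
  intros m n Hmn. rewrite KK_eq. apply Hu.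
  rewrite (bl_add _ (An_bl n)), <- An_S, (proj1 (proj2 (Hu n))), badd_0.
  rewrite K_eq, (bl_sub _ (An_bl n)), <- An_S.
  rewrite (ker_mono (S m) n), (ker_mono (S m) (S n)); try apply Hu; try lia. apply subrr.
Qed.

Lemma descent : exists p, forall y, (exists x, y = An p x) -> exists x, y = An (S p) x.
Proof.
  apply NNPP. intros H.
  assert (H1 : forall p, exists u, nn u = 1 /\ (exists x, u = An p x) /\
      forall m, (exists x, m = An (S p) x) -> 1/2 <= nn (u -: m)).
  { intros p. assert (Hy : exists y, (exists x, y = An p x) /\ ~ (exists x, y = An (S p) x)).
    { apply NNPP. intros H2. apply H. exists p. intros y Hy. apply NNPP. intros H3. apply H2. eauto. }
    destruct Hy as [y [Hy1 Hy2]].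
    destruct (riesz (fun y => exists x, y = An (S p) x) y (ran_subsp _ (An_bl (S p))) (ran_closed_n (S p)) Hy2)
      as [s [m0 [Hm0 [Hs [_ [Hz Hd]]]]]].
    exists (rs s (y -: m0)). split; auto. split; auto.
    apply (subsp_rs _ (ran_subsp _ (An_bl p))). apply (subsp_sub _ (ran_subsp _ (An_bl p))); auto.
    apply (ran_mono p (S p)); auto. }
  apply choice' in H1. destruct H1 as [u Hu].
  destruct (HK u 1) as [phi [Hp [l Hl]]]. { intros n. rewrite (proj1 (Hu n)). lra. }
  apply (sep_false (fun n => K (u n)) phi l Hp Hl).
  intros m n Hmn. simpl. rewrite norm_sym, KK_eq. apply Hu.
  pose proof (ran_subsp _ (An_bl (S m))) as HS.
  apply (subsp_add _ HS).
  - destruct (proj1 (proj2 (Hu m))) as [x Hx]. exists x. rewrite Hx. reflexivity.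
  - rewrite K_eq. apply (subsp_sub _ HS).
    + apply (ran_mono (S m) n); [lia|]. apply Hu.
    + apply (ran_mono (S m) (S n)); [lia|]. destruct (proj1 (proj2 (Hu n))) as [x Hx].
      exists x. rewrite Hx. reflexivity.
Qed.

Lemma decomposition : exists q, (1 <= q)%nat /\
   (forall x, An q (An q x) = bzero -> An q x = bzero) /\
   (forall y, exists x, An q y = An q (An q x)).
Proof.
  destruct ascent as [pa Ha]. destruct descent as [pd Hd].
  assert (Ha' : forall n y, (pa <= n)%nat -> An (S n) y = bzero -> An n y = bzero).
  { intros n y Hn H. replace (S n) with (S pa + (n - pa))%nat in H by lia.
    rewrite An_add in H. apply Ha in H. rewrite <- An_add in H.
    replace (pa + (n - pa))%nat with n in H by lia. exact H. }
  assert (Hd' : forall n y, (pd <= n)%nat -> (exists x, y = An n x) -> exists x, y = An (S n) x).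
  { intros n y Hn [x Hx]. replace n with ((n - pd) + pd)%nat in Hx by lia.
    rewrite An_add in Hx. destruct (Hd (An pd x) (ex_intro _ x eq_refl)) as [x' Hx'].
    exists x'. rewrite Hx, Hx', <- An_add. f_equal. lia. }
  set (q := S (pa + pd)). exists q. split. unfold q; lia. split.
  - intros x. rewrite <- An_add.
    assert (forall k, An (q + k) x = bzero -> An q x = bzero).
    { induction k. rewrite Nat.add_0_r. auto. intros H. apply IHk.
      apply Ha'. unfold q; lia. rewrite Nat.add_succ_r in H. exact H. }
    apply H.
  - intros y. assert (forall k, exists x, An q y = An (q + k) x).
    { induction k. exists y. rewrite Nat.add_0_r. reflexivity.
      rewrite Nat.add_succ_r. apply Hd'. unfold q; lia. exact IHk. }
    destruct (H q) as [x Hx]. exists x. rewrite Hx, An_add. reflexivity.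
Qed.
End Riesz.


Definition Csub (a b : Defs.C) : Defs.C := Cadd a (mkC (- Re b) (- Im b)).

Lemma Re_le (z : Defs.C) : Rabs (Re z) <= Cnorm z.
Proof.
  unfold Cnorm. rewrite <- (pow2_abs (Re z)), <- (pow2_abs (Im z)).
  apply le_l2, Rabs_pos.
Qed.
Lemma Im_le (z : Defs.C) : Rabs (Im z) <= Cnorm z.
Proof.
  unfold Cnorm. rewrite <- (pow2_abs (Re z)), <- (pow2_abs (Im z)), Rplus_comm.
  apply le_l2, Rabs_pos.
Qed.
Lemma Cnorm_le (z : Defs.C) : Cnorm z <= Rabs (Re z) + Rabs (Im z).
Proof.
  unfold Cnorm. rewrite <- (pow2_abs (Re z)), <- (pow2_abs (Im z)).
  apply l2_le_sum; apply Rabs_pos.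
Qed.

Definition Cinv (z : Defs.C) : Defs.C :=
  mkC (Re z / (Re z ^ 2 + Im z ^ 2)) (- Im z / (Re z ^ 2 + Im z ^ 2)).

Lemma Cmul_inv (z : Defs.C) : z <> Defs.C0 -> Cmul z (Cinv z) = Defs.C1.
Proof.
  intros Hz. assert (Hn : Re z ^ 2 + Im z ^ 2 <> 0).
  { intros H. apply Hz. destruct z as [x y]. simpl in H. unfold Defs.C0. f_equal; nra. }
  unfold Cmul, Cinv, Defs.C1. cbn [Re Im]. f_equal; field; auto.
Qed.

Lemma Cnorm_C0 : Cnorm Defs.C0 = 0.
Proof. unfold Cnorm, Defs.C0; cbn [Re Im]. replace (0 ^ 2 + 0 ^ 2) with 0 by ring. apply sqrt_0. Qed.

Section FD.
Variable X : Banach.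
Implicit Types M : X -> Prop.

Lemma key_ineq M v d : subsp M -> (forall m, M m -> d <= nn (v -: m)) -> 0 <= d ->
  forall m (l : Defs.C), M m -> Cnorm l * d <= nn (m +: bscal l v).
Proof.
  intros Hs Hd Hd0 m l Hm. destruct (classic (l = Defs.C0)) as [E|E].
  - subst. rewrite Cnorm_C0. rewrite Rmult_0_l. apply bnorm_ge0.
  - replace (m +: bscal l v) with (bscal l (v -: (-: bscal (Cinv l) m))).
    + rewrite bnorm_scal. apply Rmult_le_compat_l. apply Cnorm_ge0. apply Hd.
      apply subsp_opp; auto. apply subsp_scal; auto.
    + rewrite oppK, bscal_addr, bscal_assoc, Cmul_inv, bscal_1 by auto. apply badd_comm.
Qed.

Lemma add_vec_closed M v : subsp M -> closedp M -> ~ M v ->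
  closedp (fun z => exists m l, M m /\ z = m +: bscal l v).
Proof.
  intros Hs Hc Hv u y Hu Hconv.
  destruct (dist_pos M v Hc Hv) as [d [Hd Hdb]].
  assert (Hu' : forall n, exists p : X * Defs.C, M (fst p) /\ u n = fst p +: bscal (snd p) v).
  { intros n. destruct (Hu n) as [m [l [Hm E]]]. exists (m, l). auto. }
  apply choice' in Hu'. destruct Hu' as [f Hf].
  set (lam := fun n => snd (f n)). set (mm := fun n => fst (f n)).
  assert (Hdiff : forall j k, Cnorm (Csub (lam j) (lam k)) * d <= nn (u j -: u k)).
  { intros j k. rewrite (proj2 (Hf j)), (proj2 (Hf k)), add_sub4. unfold Csub.
    rewrite <- bscal_subl. apply key_ineq with (M := M); auto. lra. apply subsp_sub; auto; apply Hf. }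
  assert (Hcau : forall e, 0 < e -> exists N, forall j k, (N <= j)%nat -> (N <= k)%nat ->
     Cnorm (Csub (lam j) (lam k)) < e).
  { intros e He. destruct (conv_cauchy u y Hconv (e * d)) as [N HN]. nra.
    exists N. intros j k Hj Hk. specialize (HN j k Hj Hk). specialize (Hdiff j k).
    apply Rmult_lt_reg_r with d; auto. lra. }
  assert (HRe : Cauchy_crit (fun n => Re (lam n))).
  { intros e He. destruct (Hcau e He) as [N HN]. exists N. intros j k Hj Hk. unfold R_dist.
    eapply Rle_lt_trans; [|apply (HN j k)]; auto. pose proof (Re_le (Csub (lam j) (lam k))).
    unfold Csub, Cadd in H; simpl in H. unfold Rminus. exact H. }
  assert (HIm : Cauchy_crit (fun n => Im (lam n))).
  { intros e He. destruct (Hcau e He) as [N HN]. exists N. intros j k Hj Hk. unfold R_dist.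
    eapply Rle_lt_trans; [|apply (HN j k)]; auto. pose proof (Im_le (Csub (lam j) (lam k))).
    unfold Csub, Cadd in H; simpl in H. unfold Rminus. exact H. }
  destruct (R_complete _ HRe) as [lr Hlr]. destruct (R_complete _ HIm) as [li Hli].
  set (l := mkC lr li).
  assert (Hlv : converges (fun n => bscal (lam n) v) (bscal l v)).
  { intros e He. set (e' := e / (2 * (nn v + 1))).
    assert (He' : 0 < e') by (unfold e'; apply Rdiv_lt_0_compat; auto; pose proof (bnorm_ge0 _ v); lra).
    destruct (Hlr e' He') as [N1 HN1]. destruct (Hli e' He') as [N2 HN2].
    exists (N1 + N2)%nat. intros n Hn.
    specialize (HN1 n ltac:(lia)). specialize (HN2 n ltac:(lia)). unfold R_dist in *.
    rewrite <- bscal_subl, bnorm_scal.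
    pose proof (Cnorm_le (Cadd (lam n) (mkC (- Re l) (- Im l)))) as Hc1.
    cbn [Re Im Cadd] in Hc1.
    replace (Re (lam n) + - Re l) with (Re (lam n) - lr) in Hc1 by (unfold l; simpl; ring).
    replace (Im (lam n) + - Im l) with (Im (lam n) - li) in Hc1 by (unfold l; simpl; ring).
    pose proof (bnorm_ge0 _ v).
    pose proof (Cnorm_ge0 (Cadd (lam n) (mkC (- Re l) (- Im l)))).
    assert (Cnorm (Cadd (lam n) (mkC (- Re l) (- Im l))) <= 2 * e') by lra.
    assert (2 * e' * (nn v + 1) = e) by (unfold e'; field; lra). nra. }
  assert (Hm : converges mm (y -: bscal l v)).
  { eapply conv_ext; [|apply (conv_sub _ _ _ _ Hconv Hlv)]. intros n. simpl.
    rewrite (proj2 (Hf n)). apply addrK. }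
  exists (y -: bscal l v), l. split.
  - apply (Hc mm); auto. intros n; apply Hf.
  - rewrite subrK. reflexivity.
Qed.

Definition span n (v : nat -> X) (z : X) : Prop := exists c, z = lincomb n c v.

Lemma lincomb_ext n c c' (v : nat -> X) : (forall i, (i < n)%nat -> c i = c' i) ->
  lincomb n c v = lincomb n c' v.
Proof.
  induction n; intros H; simpl; auto. rewrite IHn, H; auto.
Qed.

Lemma lincomb_zero n (v : nat -> X) : lincomb n (fun _ => Defs.C0) v = bzero.
Proof. induction n; simpl; auto. rewrite IHn, bscal_0, badd_0. reflexivity. Qed.

Lemma span_subsp n v : subsp (span n v).
Proof.
  split; [|split].
  - exists (fun _ => Defs.C0). symmetry. apply lincomb_zero.
  - intros x y [c1 ->] [c2 ->]. exists (fun i => Cadd (c1 i) (c2 i)).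
    induction n; simpl. rewrite badd_0; auto.
    rewrite <- IHn, bscal_addl. rewrite <- !badd_assoc. f_equal.
    rewrite !badd_assoc. f_equal. apply badd_comm.
  - intros a x [c ->]. exists (fun i => Cmul a (c i)).
    induction n; simpl. apply bscal0r. rewrite bscal_addr, IHn, bscal_assoc. reflexivity.
Qed.

Lemma span_S n v z : span (S n) v z <-> exists m l, span n v m /\ z = m +: bscal l (v n).
Proof.
  split.
  - intros [c ->]. exists (lincomb n c v), (c n). split; auto. exists c; auto.
  - intros [m [l [[c ->] ->]]]. exists (fun i => if Nat.eqb i n then l else c i).
    simpl. rewrite Nat.eqb_refl. f_equal. apply lincomb_ext. intros i Hi.
    destruct (Nat.eqb_spec i n); auto; lia.
Qed.

Lemma closedp_ext M M' : (forall z, M z <-> M' z) -> closedp M -> closedp M'.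
Proof. intros E H u l Hu Hc. apply E. apply (H u); auto. intros n; apply E, Hu. Qed.

Lemma span_closed n v : closedp (span n v).
Proof.
  induction n.
  - intros u l Hu Hc. exists (fun _ => Defs.C0). simpl.
    apply (conv_unique u); auto. eapply conv_ext; [|apply conv_const].
    intros k. destruct (Hu k) as [c Hk]. simpl in Hk. auto.
  - destruct (classic (span n v (v n))) as [Hin|Hout].
    + apply (closedp_ext (span n v)); auto. intros z. rewrite span_S. split.
      * intros Hz. exists z, Defs.C0. split; auto. rewrite bscal_0, addr0. reflexivity.
      * intros [m [l [Hm ->]]]. apply (subsp_add _ (span_subsp n v)); auto.
        apply (subsp_scal _ (span_subsp n v)); auto.
    + apply (closedp_ext (fun z => exists m l, span n v m /\ z = m +: bscal l (v n))).
      intros z; rewrite span_S; tauto.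
      apply add_vec_closed; auto. apply span_subsp.
Qed.

Lemma lincomb_delta n m (v : nat -> X) : (m < n)%nat ->
  lincomb n (fun i => if Nat.eqb i m then Defs.C1 else Defs.C0) v = v m.
Proof.
  induction n; intros H. lia. simpl. destruct (Nat.eqb_spec n m).
  - subst. rewrite bscal_1. rewrite (lincomb_ext _ _ (fun _ => Defs.C0)), lincomb_zero, badd_0; auto.
    intros i Hi. destruct (Nat.eqb_spec i m); auto; lia.
  - rewrite IHn by lia. rewrite bscal_0, addr0. reflexivity.
Qed.
End FD.

Fixpoint seqv {Z : Banach} (g : nat * (nat -> Z) -> Z) (n : nat) : nat -> Z :=
  match n with
  | O => fun _ => bzero
  | S n' => fun i => if Nat.eqb i n' then g (n', seqv g n') else seqv g n' i
  end.

Lemma seqv_eq {Z : Banach} (g : nat * (nat -> Z) -> Z) n i : (i < n)%nat ->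
  seqv g n i = g (i, seqv g i).
Proof.
  induction n; intros H. lia. simpl. destruct (Nat.eqb_spec i n). subst; auto. apply IHn. lia.
Qed.

Definition idcpt (Z : Banach) : Prop :=
  forall u : nat -> Z, (forall n, nn (u n) <= 1) ->
    exists phi, incr phi /\ exists l, converges (fun n => u (phi n)) l.

Lemma findim_of_idcpt (Z : Banach) : idcpt Z -> finite_dimensional Z.
Proof.
  intros Hc. apply NNPP. intros H.
  assert (H1 : forall p : nat * (nat -> Z), exists w, nn w = 1 /\
      forall m, span Z (fst p) (snd p) m -> 1/2 <= nn (w -: m)).
  { intros [n v]. simpl. assert (Hz : exists z, ~ span Z n v z).
    { apply NNPP. intros H2. apply H. exists n, v. intros z. apply NNPP. intros H3. apply H2.
      exists z. intros [c Hc']. apply H3. exists c; auto. }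
    destruct Hz as [z Hz].
    destruct (riesz (span Z n v) z (span_subsp Z n v) (span_closed Z n v) Hz)
      as [s [m0 [_ [_ [_ [Hn Hd]]]]]].
    exists (rs s (z -: m0)). auto. }
  apply choice' in H1. destruct H1 as [g Hg].
  set (u := fun n => g (n, seqv g n)).
  destruct (Hc u) as [phi [Hp [l Hl]]]. { intros n. unfold u. rewrite (proj1 (Hg _)). lra. }
  apply (sep_false u phi l Hp Hl). intros m n Hmn. unfold u at 1. apply (proj2 (Hg (n, seqv g n))).
  simpl. exists (fun i => if Nat.eqb i m then Defs.C1 else Defs.C0). rewrite lincomb_delta; auto.
  rewrite seqv_eq; auto.
Qed.


Lemma lower_R (Y : Banach) (B K : Y -> Y) : bounded_linear B -> cpt K -> (forall y, B y = y -: K y) ->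
  (forall x, B (B x) = bzero -> B x = bzero) ->
  exists c, 0 < c /\ forall x, nn (B x) <= c * nn (B (B x)).
Proof.
  intros HB HK HBK HP. apply NNPP. intros H.
  assert (H1 : forall k : nat, exists z, nn z = 1 /\ (exists x, z = B x) /\ nn (B z) <= / (INR k + 1)).
  { intros k. assert (Hk : exists x, (INR k + 1) * nn (B (B x)) < nn (B x)).
    { apply NNPP. intros H2. apply H. exists (INR k + 1). split. pose proof (pos_INR k); lra.
      intros x. apply Rnot_lt_le. intros H3. apply H2. eauto. }
    destruct Hk as [x Hx]. assert (0 <= nn (B (B x))) by apply bnorm_ge0.
    assert (Hk0 : 0 < INR k + 1) by (pose proof (pos_INR k); lra).
    assert (Hr : 0 < nn (B x)) by nra.
    exists (rs (/ nn (B x)) (B x)). split.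
    { rewrite rs_norm, Rabs_right. field; lra. apply Rle_ge, Rlt_le, Rinv_0_lt_compat; auto. }
    split. { exists (rs (/ nn (B x)) x). rewrite (bl_rs B HB). reflexivity. }
    rewrite (bl_rs B HB), rs_norm, Rabs_right by (apply Rle_ge, Rlt_le, Rinv_0_lt_compat; auto).
    apply Rmult_le_reg_l with (nn (B x)); auto. rewrite <- Rmult_assoc, Rinv_r, Rmult_1_l by lra.
    apply Rmult_le_reg_l with (INR k + 1); auto.
    replace ((INR k + 1) * (nn (B x) * / (INR k + 1))) with (nn (B x)) by (field; lra). lra. }
  apply choice' in H1. destruct H1 as [z Hz].
  destruct (extract Y B K HB HK HBK z 1 bzero) as [phi [w [Hp [Hw HBw]]]].
  { intros n. rewrite (proj1 (Hz n)). lra. }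
  { apply conv0. intros k. apply Hz. }
  assert (HwR : exists x, w = B x).
  { apply (ran_closed Y B K HB HK HBK (fun n => z (phi n))); auto. intros n. apply Hz. }
  destruct HwR as [x Hx]. subst w. apply (conv_norm0 _ _ Hw). intros n; apply Hz. auto.
Qed.

Lemma iso_lemma (U V : Banach) (f : U -> V) : bounded_linear f -> (forall v, exists u, f u = v) ->
  (exists C, forall u, nn u <= C * nn (f u)) -> isomorphic V U.
Proof.
  intros Hf Hs [C HC].
  assert (Hinj : forall u u', f u = f u' -> u = u').
  { intros u u' E. apply norm_eq0_sub. apply Rle_antisym; [|apply bnorm_ge0].
    eapply Rle_trans. apply HC. rewrite (bl_sub f Hf), E, subrr, norm0. lra. }
  apply choice' in Hs. destruct Hs as [g Hg].
  exists g. split.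
  - split; [|split].
    + intros x y. apply Hinj. rewrite (bl_add f Hf), !Hg. auto.
    + intros a x. apply Hinj. rewrite (bl_scal f Hf), !Hg. auto.
    + exists C. intros x. rewrite <- (Hg x) at 2. apply HC.
  - exists f. split; [exact Hf|]. split; [exact Hg|]. intros u. apply Hinj. rewrite Hg. reflexivity.
Qed.

Lemma bl_into_sub (U V : Banach) (M : ClosedSubspace V) (g : U -> V) (h : forall u, smem M (g u)) :
  bounded_linear g -> bounded_linear (fun u => (exist _ (g u) (h u) : subBanach V M)).
Proof.
  intros Hg. split; [|split].
  - intros x y. apply sig_eq. simpl. apply (bl_add g Hg).
  - intros a x. apply sig_eq. simpl. apply (bl_scal g Hg).
  - destruct (bl_bound g Hg) as [M0 [H0 HM]]. exists M0. intros x. simpl. apply HM.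
Qed.

Lemma bl_pair (U V W : Banach) (f1 : U -> V) (f2 : U -> W) : bounded_linear f1 -> bounded_linear f2 ->
  bounded_linear (fun u => ((f1 u, f2 u) : dsum V W)).
Proof.
  intros H1 H2. split; [|split].
  - intros x y. simpl. rewrite (bl_add f1 H1), (bl_add f2 H2). reflexivity.
  - intros a x. simpl. rewrite (bl_scal f1 H1), (bl_scal f2 H2). reflexivity.
  - destruct (bl_bound f1 H1) as [M1 [HM1 HB1]]. destruct (bl_bound f2 H2) as [M2 [HM2 HB2]].
    exists (M1 + M2). intros x. simpl. unfold dnorm. simpl.
    eapply Rle_trans. apply l2_le_sum; apply bnorm_ge0.
    specialize (HB1 x). specialize (HB2 x). lra.
Qed.

Definition mkCS {X : Banach} (M : X -> Prop) (Hs : subsp M) (Hc : closedp M) : ClosedSubspace X :=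
  Build_ClosedSubspace X M (subsp_0 M Hs) (subsp_add M Hs) (subsp_scal M Hs) Hc.

Lemma core (X Y : Banach) (a : Y -> X) (L : X -> Y) (K : Y -> Y)
  (Ha : bounded_linear a) (HL : bounded_linear L) (HK : cpt K)
  (Heq : forall y, y -: K y = L (a y)) :
  exists (M : ClosedSubspace X) (Z : Banach), finite_dimensional Z /\ isomorphic (dsum (subBanach X M) Z) Y.
Proof.
  set (A := fun y => L (a y)).
  assert (HA : bounded_linear A) by exact (bl_comp a L Ha HL).
  assert (HAK : forall y, A y = y -: K y) by (intros; unfold A; rewrite Heq; auto).
  destruct (decomposition Y A K HA HK HAK) as [q [Hq [P1 P2]]].
  set (B := An Y A q).
  assert (HB : bounded_linear B) by apply An_bl, HA.
  set (Kq := Kn Y A q).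
  assert (HKq : cpt Kq) by (apply (Kn_cpt Y A K); auto).
  assert (HBK : forall y, B y = y -: Kq y) by (intros; apply An_eq).
  destruct (lower_R Y B Kq HB HKq HBK P1) as [c [Hc Hcb]].
  set (L' := fun x => An Y A (q - 1) (L x)).
  assert (HL' : bounded_linear L') by exact (bl_comp L _ HL (An_bl Y A HA (q - 1))).
  assert (HBL : forall y, B y = L' (a y)).
  { intros y. unfold B, L'. replace q with (S (q - 1)) at 1 by lia. rewrite An_S. reflexivity. }
  destruct (bl_bound L' HL') as [ML [HML HMLb]].
  set (C' := c * ML).
  assert (HC' : 0 < C') by (unfold C'; nra).
  set (R := fun y => exists x, y = B x).
  assert (HRs : subsp R) by apply (ran_subsp B HB).
  assert (HRc : closedp R) by apply (ran_closed Y B Kq HB HKq HBK).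
  assert (lowa : forall y, R y -> nn y <= C' * nn (a y)).
  { intros y [x Hx]. subst y. eapply Rle_trans. apply Hcb. unfold C'. rewrite Rmult_assoc.
    apply Rmult_le_compat_l. lra. rewrite HBL. apply HMLb. }
  assert (Hdec : forall y, exists r, R r /\ B r = B y).
  { intros y. destruct (P2 y) as [x Hx]. exists (B x). split. exists x; auto. auto. }
  apply choice' in Hdec. destruct Hdec as [p Hp].
  assert (Hpu : forall y r, R r -> B r = B y -> p y = r).
  { intros y r Hr Hbr. apply subr_eq0.
    assert (HR : R (p y -: r)) by (apply subsp_sub; auto; apply Hp).
    destruct HR as [x Hx]. rewrite Hx. apply P1. change (B (B x) = bzero). rewrite <- Hx.
    rewrite (bl_sub B HB), (proj2 (Hp y)), Hbr. apply subrr. }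
  assert (Hpl : bounded_linear p).
  { split; [|split].
    - intros x y. apply Hpu. apply subsp_add; auto; apply Hp.
      rewrite !(bl_add B HB), !(proj2 (Hp _)). reflexivity.
    - intros s x. apply Hpu. apply subsp_scal; auto; apply Hp.
      rewrite !(bl_scal B HB), !(proj2 (Hp _)). reflexivity.
    - destruct (bl_bound B HB) as [MB [HMB HMBb]]. exists (c * MB). intros y.
      destruct (proj1 (Hp y)) as [x Hx]. rewrite Hx. eapply Rle_trans. apply Hcb.
      rewrite <- Hx, (proj2 (Hp y)), Rmult_assoc. apply Rmult_le_compat_l. lra. apply HMBb. }
  set (MX := fun x => exists r, R r /\ x = a r).
  assert (HMXs : subsp MX).
  { split; [|split].
    - exists bzero. split. apply subsp_0; auto. symmetry; apply bl_0, Ha.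
    - intros x y [r [Hr ->]] [r' [Hr' ->]]. exists (r +: r'). split. apply subsp_add; auto.
      symmetry; apply bl_add, Ha.
    - intros s x [r [Hr ->]]. exists (bscal s r). split. apply subsp_scal; auto.
      symmetry; apply bl_scal, Ha. }
  assert (HMXc : closedp MX).
  { intros u l Hu Hc0. assert (Hu' : forall n, exists r, R r /\ u n = a r) by exact Hu.
    apply choice' in Hu'. destruct Hu' as [r Hr].
    assert (Hcau : exists rl, converges r rl).
    { apply bcomplete. intros e He. destruct (conv_cauchy u l Hc0 (e / C')) as [N HN].
      apply Rdiv_lt_0_compat; auto. exists N. intros m n Hm Hn.
      eapply Rle_lt_trans. apply lowa. apply subsp_sub; auto; apply Hr.
      rewrite (bl_sub a Ha), <- !(proj2 (Hr _)). specialize (HN m n Hm Hn).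
      apply Rmult_lt_compat_l with (r := C') in HN; auto.
      replace (C' * (e / C')) with e in HN by (field; lra). exact HN. }
    destruct Hcau as [rl Hrl]. exists rl. split. apply (HRc r); auto. intros; apply Hr.
    apply (conv_unique u). auto. eapply conv_ext; [|apply (bl_conv a _ _ Ha Hrl)].
    intros n; simpl. symmetry; apply Hr. }
  set (MXcs := mkCS MX HMXs HMXc).
  set (Ncs := mkCS (fun y => B y = bzero) (ker_subsp B HB) (ker_closed B HB)).
  exists MXcs, (subBanach Y Ncs). split.
  - apply findim_of_idcpt. intros u Hu.
    set (v := fun n => proj1_sig (u n)).
    assert (Hv : forall n, B (v n) = bzero) by (intros n; exact (proj2_sig (u n))).
    assert (HvK : forall n, v n = Kq (v n)).
    { intros n. apply subr_eq0. rewrite <- HBK. apply Hv. }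
    destruct (HKq v 1) as [phi [Hphi [l Hl]]]. { intros n. apply (Hu n). }
    assert (Hl' : converges (fun n => v (phi n)) l).
    { eapply conv_ext; [|exact Hl]. intros n. simpl. symmetry; apply HvK. }
    assert (HlN : B l = bzero).
    { apply (ker_closed B HB (fun n => v (phi n))); auto. }
    exists phi. split; auto. exists (exist _ l HlN : subBanach Y Ncs).
    intros e He. destruct (Hl' e He) as [N HN]. exists N. intros n Hn. simpl. apply HN; auto.
  - assert (HpMX : forall y, smem MXcs (a (p y))).
    { intros y. simpl. exists (p y). split; auto. apply Hp. }
    assert (HpN : forall y, smem Ncs (y -: p y)).
    { intros y. simpl. rewrite (bl_sub B HB), (proj2 (Hp y)). apply subrr. }
    apply (iso_lemma Y (dsum (subBanach X MXcs) (subBanach Y Ncs))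
       (fun y => (((exist _ (a (p y)) (HpMX y) : subBanach X MXcs),
                  (exist _ (y -: p y) (HpN y) : subBanach Y Ncs)) : dsum (subBanach X MXcs) (subBanach Y Ncs)))).
    + apply bl_pair.
      * apply (bl_into_sub Y X MXcs (fun y => a (p y))). apply bl_comp; auto.
      * apply (bl_into_sub Y Y Ncs (fun y => y -: p y)). apply bl_subf; auto. apply bl_id.
    + intros [[x hx] [n hn]]. simpl in hx, hn. destruct hx as [r [Hr Hx]].
      exists (r +: n). assert (E : p (r +: n) = r).
      { apply Hpu; auto. rewrite (bl_add B HB), hn, addr0. reflexivity. }
      f_equal; apply sig_eq; simpl; rewrite E. auto. apply addKr.
    + exists (C' + 1). intros y. simpl. unfold dnorm. simpl.
      set (n1 := nn (a (p y))). set (n2 := nn (y -: p y)).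
      assert (H1 : n1 <= sqrt (n1 ^ 2 + n2 ^ 2)) by (apply le_l2, bnorm_ge0).
      assert (H2 : n2 <= sqrt (n1 ^ 2 + n2 ^ 2)) by (rewrite Rplus_comm; apply le_l2, bnorm_ge0).
      assert (H3 : nn (p y) <= C' * n1) by (apply lowa, Hp).
      assert (H4 : nn y <= nn (p y) + n2).
      { unfold n2. rewrite <- (subKr (p y) y) at 1. apply bnorm_tri. }
      assert (0 <= n1) by apply bnorm_ge0. idtac.
      assert (H5 : C' * n1 <= C' * sqrt (n1 ^ 2 + n2 ^ 2)) by (apply Rmult_le_compat_l; lra). idtac.
      replace (n1 * (n1 * 1) + n2 * (n2 * 1)) with (n1 ^ 2 + n2 ^ 2) by ring. lra.
Qed.


Lemma bl_fst (V W : Banach) : bounded_linear (fun p : dsum V W => fst p).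
Proof.
  split; [|split]; auto. exists 1. intros [x y]. simpl. unfold dnorm; simpl.
  rewrite Rmult_1_l. apply (le_l2 (nn x) (nn y)), bnorm_ge0.
Qed.
Lemma bl_snd (V W : Banach) : bounded_linear (fun p : dsum V W => snd p).
Proof.
  split; [|split]; auto. exists 1. intros [x y]. simpl. unfold dnorm; simpl.
  rewrite Rmult_1_l, Rplus_comm. apply (le_l2 (nn y) (nn x)), bnorm_ge0.
Qed.
Lemma bl_inl (V W : Banach) : bounded_linear (fun x : V => ((x, bzero) : dsum V W)).
Proof.
  split; [|split].
  - intros x y. simpl. rewrite badd_0. reflexivity.
  - intros a x. simpl. rewrite bscal0r. reflexivity.
  - exists 1. intros x. simpl. unfold dnorm; simpl. rewrite norm0.
    eapply Rle_trans. apply l2_le_sum. apply bnorm_ge0. lra. lra.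
Qed.
Lemma bl_inr (V W : Banach) : bounded_linear (fun x : W => ((bzero, x) : dsum V W)).
Proof.
  split; [|split].
  - intros x y. simpl. rewrite badd_0. reflexivity.
  - intros a x. simpl. rewrite bscal0r. reflexivity.
  - exists 1. intros x. simpl. unfold dnorm; simpl. rewrite norm0.
    eapply Rle_trans. apply l2_le_sum. lra. apply bnorm_ge0. lra.
Qed.

Theorem proposition5p6 (P : Banach -> Prop) (HP : banach_property P)
  (X Y : Banach) (T : X -> X) (S : Y -> Y)
  (HT : bounded_linear T) (HS : bounded_linear S)
  (Heq : equivalent_after_extension T S) (HSc : compact_op S)
  (Hsub : transfers_to_closed_subspaces P X)
  (Hfin : preserved_under_findim_sums P) :
  P Y.
Proof.
  destruct Heq as [X' [Y' [E [F [[HEl _] [[HFl [G [HGl [HGF HFG]]]] HTS]]]]]].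
  set (a := fun y : Y => fst (G ((y, bzero) : dsum Y Y'))).
  set (L := fun x : X => fst (F ((x, bzero) : dsum X X'))).
  set (G2 := fun z : Y => fst (F ((bzero, snd (E ((z, bzero) : dsum Y Y'))) : dsum X X'))).
  assert (Ha : bounded_linear a).
  { apply (bl_comp (fun y : Y => G ((y, bzero) : dsum Y Y')) (fun p : dsum X X' => fst p)).
    apply (bl_comp (fun y : Y => ((y, bzero) : dsum Y Y')) G); auto. apply bl_inl. apply bl_fst. }
  assert (HL : bounded_linear L).
  { apply (bl_comp (fun x : X => F ((x, bzero) : dsum X X')) (fun p : dsum Y Y' => fst p)).
    apply (bl_comp (fun x : X => ((x, bzero) : dsum X X')) F); auto. apply bl_inl. apply bl_fst. }
  assert (HG2 : bounded_linear G2).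
  { apply (bl_comp (fun z : Y => F ((bzero, snd (E ((z, bzero) : dsum Y Y'))) : dsum X X')) (fun p : dsum Y Y' => fst p)); [|apply bl_fst].
    apply (bl_comp (fun z : Y => ((bzero, snd (E ((z, bzero) : dsum Y Y'))) : dsum X X')) F); auto.
    apply (bl_comp (fun z : Y => snd (E ((z, bzero) : dsum Y Y'))) (fun x : X' => ((bzero, x) : dsum X X'))); [|apply bl_inr].
    apply (bl_comp (fun z : Y => E ((z, bzero) : dsum Y Y')) (fun p : dsum X X' => snd p)); [|apply bl_snd].
    apply (bl_comp (fun z : Y => ((z, bzero) : dsum Y Y')) E); auto. apply bl_inl. }
  assert (HK : cpt (fun y => G2 (S y))).
  { apply cpt_comp_l; auto. apply compact_cpt; auto. }
  assert (Hrel : forall y, y -: G2 (S y) = L (a y)).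
  { intros y. set (g := G ((y, bzero) : dsum Y Y')).
    assert (HFg : F g = ((y, bzero) : dsum Y Y')) by apply HFG.
    pose proof (HTS g) as H. rewrite HFg in H. simpl in H.
    assert (Hg2 : snd g = snd (E ((S y, bzero) : dsum Y Y'))) by (rewrite <- H; reflexivity).
    assert (Hsplit : g = badd ((fst g, bzero) : dsum X X') ((bzero, snd g) : dsum X X')).
    { destruct g as [g1 g2]. simpl. rewrite addr0, badd_0. reflexivity. }
    assert (Hy : y = L (a y) +: G2 (S y)).
    { unfold L, a, G2. fold g. rewrite <- Hg2.
      change (y = fst (F ((fst g, bzero) : dsum X X')) +: fst (F ((bzero, snd g) : dsum X X'))).
      change (fst (F ((fst g, bzero) : dsum X X')) +: fst (F ((bzero, snd g) : dsum X X')))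
        with (fst (badd (F ((fst g, bzero) : dsum X X')) (F ((bzero, snd g) : dsum X X')))).
      rewrite <- (bl_add F HFl), <- Hsplit, HFg. reflexivity. }
    rewrite Hy at 1. apply addrK. }
  destruct (core X Y a L (fun y => G2 (S y)) Ha HL HK Hrel) as [M [Z [HZ Hiso]]].
  apply (HP (dsum (subBanach X M) Z) Y Hiso). apply Hfin; auto.
Qed.
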